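(* Let $\theta\in\mathcal{N}$ be bounded. For $n\ge1$ put $e^\theta_n=[\lambda(n-1;\theta),\lambda(n;\theta)]$ (with $\lambda(0;\theta)=*$). Then $P^\theta(\{(e^\theta_n)_{n=1}^\infty\})>0$ and \[P^\theta\Big(\bigcup_{\gamma\in\mathfrak{S}}\{\gamma((e^\theta_n)_{n=1}^\infty)\}\Big)=1.\]
   Context: Fix $q\in(0,1)$. Gelfand--Tsetlin graph: for $N\ge1$ let $\mathrm{Sign}_N=\{\lambda\in\mathbb{Z}^N\mid \lambda_1\ge\cdots\ge\lambda_N\}$, $\mathrm{Sign}_0=\{*\}$, $|\lambda|=\lambda_1+\cdots+\lambda_N$. For $\mu\in\mathrm{Sign}_{N-1}$, $\lambda\in\mathrm{Sign}_N$ write $\mu\prec\lambda$ if $\lambda_1\ge\mu_1\ge\lambda_2\ge\cdots\ge\mu_{N-1}\ge\lambda_N$ (with $*\prec\lambda$ for all $\lambda\in\mathrm{Sign}_1$). Edges of level $N$ are pairs $[\mu,\lambda]$ with $\mu\prec\lambda$, source $\mu$, range $\lambda$; a path is a sequence of edges with the range of each equal to the source of the next. Weight $w([\mu,\lambda])=q^{N|\mu|-(N-1)|\lambda|}$ for a level-$N$ edge, multiplicative along paths. For $\mu\in\mathrm{Sign}_K,\lambda\in\mathrm{Sign}_N$, $K<N$: $\dim_q(\mu,\lambda)=\sum_\alpha w(\alpha)$ over finite paths $\alpha$ from $\mu$ to $\lambda$; $\dim_q(\lambda)=\dim_q( *,\lambda)$. $\Omega$: infinite paths from $*$; $C_\alpha$: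 infinite paths beginning with the finite path $\alpha$; $\mathcal{C}$: $\sigma$-algebra generated by the $C_\alpha$. $P$ is $q$-central if $P(C_\alpha)/w(\alpha)=P(\{\omega\mid r(\omega_N)=\lambda\})/\dim_q(\lambda)$ for all $\lambda\in\mathrm{Sign}_N$ and paths $\alpha$ from $*$ to $\lambda$. For $\lambda\in\mathrm{Sign}_N$, each permutation $\gamma_0$ of the finite paths from $*$ to $\lambda$ acts on $\Omega$ by replacing the initial segment $(\omega_1,\dots,\omega_N)$ by its image under $\gamma_0$ when $\omega_N$ ends at $\lambda$ and fixing other $\omega$; $\mathfrak{S}_N$ is generated by these for all $\lambda\in\mathrm{Sign}_N$, $\mathfrak{S}=\bigcup_N\mathfrak{S}_N$. Let $\mathcal{N}=\{\theta\in\mathbb{Z}^\infty\mid\theta_1\le\theta_2\le\cdots\}$ and $\lambda(n;\theta)=(\theta_n,\dots,\theta_1)\in\mathrm{Sign}_n$. (Known fact:) for each $\theta\in\mathcal{N}$ there is a unique $q$-central probability measure $P^\theta$ with $P^\theta(C_\alpha)/\dim_q(\lambda)=\lim_{n\to\infty}\dim_q(\lambda,\lambda(n;\theta))/\dim_q(\lambda(n;\theta))$ for every finite path $\alpha$ from $*$ to $\lambda\in\mathrm{Sign}_N$; the $P^\theta$ are exactly the extreme, equivalently $\mathfrak{S}$-ergodic, $q$-central probability measures. *)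

(* Defs.v *)
From HB Require Import structures.
From mathcomp Require Import all_boot all_order all_algebra.
From mathcomp Require Import all_classical all_reals all_analysis.
Set Implicit Arguments. Unset Strict Implicit. Unset Printing Implicit Defensive.
Import Order.TTheory GRing.Theory Num.Theory numFieldNormedType.Exports.
Local Open Scope classical_set_scope.
Local Open Scope ring_scope.

(* Signatures of length N are lists [l_1; ...; l_N] of integers with
   l_1 >= ... >= l_N; Sign_0 = {*} is represented by the empty list. *)
Definition is_sign (N : nat) (l : seq int) : Prop :=
  size l = N /\ forall i, (i.+1 < N)%N -> nth 0 l i.+1 <= nth 0 l i.

Definition sgn_sum (l : seq int) : int := \sum_(x <- l) x.

Definition prec (mu lam : seq int) : Prop :=
  exists N, [/\ is_sign N mu, is_sign N.+1 lam &
    forall i, (i < N)%N -> nth 0 lam i.+1 <= nth 0 mu i /\ nth 0 mu i <= nth 0 lam i].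

(* A finite path is represented by its list of vertices [nu_K; ...; nu_N]
   (the edges being [nu_{i-1}, nu_i]). *)
Fixpoint is_fpath (mu : seq int) (s : seq (seq int)) : Prop :=
  match s with
  | [::] => True
  | nu :: s' => prec mu nu /\ is_fpath nu s'
  end.

Definition fpath_from_to (mu lam : seq int) (a : seq (seq int)) : Prop :=
  exists s, [/\ a = mu :: s, is_fpath mu s & last mu s = lam].

Definition fpaths_to (lam : seq int) : set (seq (seq int)) :=
  [set a | fpath_from_to [::] lam a].

Section Weights.
Variables (R : realType) (q : R).

Definition edge_w (mu lam : seq int) : R :=
  q ^ ((size lam)%:Z * sgn_sum mu - ((size lam)%:Z - 1) * sgn_sum lam).

Fixpoint pw (mu : seq int) (s : seq (seq int)) : R :=
  match s with
  | [::] => 1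
  | nu :: s' => edge_w mu nu * pw nu s'
  end.

Definition weight (a : seq (seq int)) : R :=
  match a with [::] => 1 | mu :: s => pw mu s end.

Definition dimq (mu lam : seq int) : R :=
  \sum_(a \in [set a | fpath_from_to mu lam a]) weight a.

End Weights.

(* An infinite path from * is given by its vertex sequence w 0 = *, w 1, ...;
   its n-th edge is omega_n = [w (n-1), w n], with range r(omega_n) = w n. *)
Definition is_inf_path (w : nat -> seq int) : Prop :=
  w 0%N = [::] /\ forall n, prec (w n) (w n.+1).

Definition Omega := {w : nat -> seq int | is_inf_path w}.

Lemma omega0_proof : is_inf_path (fun n => nseq n (0 : int)).
Proof.
split => // n; exists n; split.
- by split; [rewrite size_nseq | move=> i _; rewrite !nth_nseq !if_same].
- by split; [rewrite size_nseq | move=> i _; rewrite !nth_nseq !if_same].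
- by move=> i lt; rewrite !nth_nseq !if_same.
Qed.

HB.instance Definition _ := gen_eqMixin Omega.
HB.instance Definition _ := gen_choiceMixin Omega.
HB.instance Definition _ := isPointed.Build Omega (exist _ _ omega0_proof).

Definition cyl (a : seq (seq int)) : set Omega :=
  [set w | forall i, (i < size a)%N -> sval w i = nth [::] a i].

Definition cylinders : set (set Omega) :=
  [set C | exists lam a, fpaths_to lam a /\ C = cyl a].

Definition OmegaM := g_sigma_algebraType cylinders.

Definition level_set (N : nat) (lam : seq int) : set OmegaM :=
  [set w | sval w N = lam].

Section Measures.
Variables (R : realType) (q : R).

Definition q_central (P : probability OmegaM R) : Prop :=
  forall N lam a, is_sign N lam -> fpaths_to lam a ->
    fine (P (cyl a)) / weight q a = fine (P (level_set N lam)) / dimq q [::] lam.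

(* lambda(n; theta) = (theta_n, ..., theta_1), with theta_{i+1} = theta i *)
Definition lam_th (theta : nat -> int) (n : nat) : seq int :=
  rev (mkseq theta n).

Definition is_P_theta (theta : nat -> int) (P : probability OmegaM R) : Prop :=
  q_central P /\
  forall N lam a, is_sign N lam -> fpaths_to lam a ->
    (fun n => dimq q lam (lam_th theta n) / dimq q [::] (lam_th theta n))
      @ \oo --> fine (P (cyl a)) / weight q a.

End Measures.

Record gen := Gen { g_lam : seq int; g_perm : seq (seq int) -> seq (seq int) }.

Definition is_gen (N : nat) (g : gen) : Prop :=
  is_sign N (g_lam g) /\
  set_bij (fpaths_to (g_lam g)) (fpaths_to (g_lam g)) (g_perm g).

Definition gact (g : gen) (w : nat -> seq int) : nat -> seq int :=
  let N := size (g_lam g) in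
  if w N == g_lam g then
    (fun i => if (i <= N)%N then nth [::] (g_perm g (mkseq w N.+1)) i else w i)
  else w.

Fixpoint all_gen (N : nat) (s : seq gen) : Prop :=
  match s with [::] => True | g :: s' => is_gen N g /\ all_gen N s' end.

(* orbit of x under S = \bigcup_N S_N, S_N being the group generated by the
   level-N generators (closed under inverses, so finite words suffice) *)
Definition S_orbit (x : nat -> seq int) : set OmegaM :=
  [set w | exists N (s : seq gen), all_gen N s /\ sval w = foldr gact x s].

(* Main.v *)
Require Import Defs.
From HB Require Import structures.
From mathcomp Require Import all_boot all_order all_algebra.
From mathcomp Require Import all_classical all_reals all_analysis.
From mathcomp Require Import zify ring lra.
Import Order.TTheory GRing.Theory Num.Theory numFieldNormedType.Exports.
Local Open Scope classical_set_scope.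
Local Open Scope ring_scope.
Set Implicit Arguments. Unset Strict Implicit. Unset Printing Implicit Defensive.
Definition irange (b a : int) : seq int :=
  [seq b + (i%:Z) | i <- iota 0 (absz (a - b)).+1].

Fixpoint precs0 (l : seq int) : seq (seq int) :=
  match l with
  | [::] => [::]
  | a :: t => match t with
              | [::] => [:: [::]]
              | b :: _ => [seq y :: r | y <- irange b a, r <- precs0 t]
              end
  end.

Definition signb (l : seq int) : bool := sorted (fun x y : int => y <= x) l.
Definition precs l := if signb l then precs0 l else [::].

Definition inter (mu lam : seq int) : Prop :=
  size lam = (size mu).+1 /\
  forall i, (i < size mu)%N -> nth 0 lam i.+1 <= nth 0 mu i /\ nth 0 mu i <= nth 0 lam i.

Lemma mem_irange b a y : b <= a -> (y \in irange b a) = (b <= y <= a).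
Proof.
move=> ba; apply/mapP/idP.
- move=> [i]; rewrite mem_iota add0n => /andP[_ hi] ->.
  apply/andP; split; first by rewrite lerDl.
  have : (i <= absz (a - b))%N by [].
  move: ba; lia.
- move=> /andP[h1 h2]; exists (absz (y - b)); last by lia.
  rewrite mem_iota add0n /=; lia.
Qed.

Lemma uniq_irange b a : uniq (irange b a).
Proof.
rewrite map_inj_uniq ?iota_uniq // => i j /addrI [].
done.
Qed.

Lemma signb_cons a t : signb (a :: t) -> signb t.
Proof. by rewrite /signb /=; apply: path_sorted. Qed.

Lemma signbP l : reflect (forall i, (i.+1 < size l)%N -> nth 0 l i.+1 <= nth 0 l i) (signb l).
Proof. exact: sortedP. Qed.

Lemma is_signE N l : is_sign N l <-> size l = N /\ signb l.
Proof.
split.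
- by move=> [<- h]; split => //; apply/signbP.
- by move=> [<- /signbP h]; split.
Qed.

Lemma mem_precs0 lam mu : signb lam -> (0 < size lam)%N ->
  (mu \in precs0 lam) <-> inter mu lam.
Proof.
elim: lam mu => // a [|b t] IH mu sl _.
- rewrite /= inE /inter /=; split.
  + by move=> /eqP ->; split.
  + by case: mu => [|y r] [] //=.
- have sbt : signb (b :: t) by exact: signb_cons sl.
  have ba : b <= a by move: sl; rewrite /signb /= => /andP[].
  change (precs0 (a :: b :: t)) with [seq y :: r | y <- irange b a, r <- precs0 (b :: t)].
  split.
  + move=> /allpairsP [[y r] /= [yin rin ->]].
    have [hs hr] := (IH r sbt isT).1 rin.
    move: yin; rewrite mem_irange // => /andP[y1 y2].
    split; first by move: hs => /= ->.
    by case=> [|i] /= hi; [split | apply: hr].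
  + case: mu => [[]//|y r] [hs hr].
    have {}hs : size (b :: t) = (size r).+1 by move: hs => /= [->].
    apply/allpairsP; exists (y, r); split => //=.
    * rewrite mem_irange //; have [h1 h2] := hr 0%N isT; exact/andP.
    * apply/(IH r sbt isT); split => // i hi.
      exact: (hr i.+1 hi).
Qed.

Lemma mem_precs lam mu : (mu \in precs lam) <-> (signb lam /\ inter mu lam).
Proof.
rewrite /precs; case: ifP => sl.
- case: lam sl => [|a t] sl.
  + by split => //; move=> [_ []].
  + by rewrite mem_precs0 //; split => // -[].
- by split => //; move=> [h _]; rewrite h in sl.
Qed.

Lemma prec_precs mu lam : prec mu lam <-> mu \in precs lam.
Proof.
rewrite mem_precs; split.
- move=> [N [/is_signE [sm _] /is_signE [sl bl] h]].
  by split => //; split; [rewrite sl sm | rewrite sm].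
- move=> [bl [hs h]]; exists (size mu); split => //.
  + apply/is_signE; split => //; apply/signbP => i hi.
    have [h1 _] := h i (ltnW hi); have [_ h2] := h i.+1 hi.
    exact: le_trans h2 h1.
  + by apply/is_signE.
Qed.

Lemma uniq_precs0 lam : uniq (precs0 lam).
Proof.
elim: lam => // a [|b t] IH //.
change (uniq [seq y :: r | y <- irange b a, r <- precs0 (b :: t)]).
apply: allpairs_uniq => //; first exact: uniq_irange.
by move=> [y r] [y' r'] _ _ /= [-> ->].
Qed.

Lemma uniq_precs lam : uniq (precs lam).
Proof. by rewrite /precs; case: ifP => // _; exact: uniq_precs0. Qed.

Fixpoint pths_aux (d : nat) (mu lam : seq int) : seq (seq (seq int)) :=
  match d with
  | 0 => if lam == mu then [:: [:: mu]] else [::]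
  | d.+1 => [seq rcons a lam | nu <- precs lam, a <- pths_aux d mu nu]
  end.

Definition pths mu lam :=
  if (size mu <= size lam)%N then pths_aux (size lam - size mu) mu lam else [::].

Lemma is_fpath_rcons mu s z :
  is_fpath mu (rcons s z) <-> is_fpath mu s /\ prec (last mu s) z.
Proof.
elim: s mu => [|y s IH] mu /=; first by split => [[]|[]].
rewrite IH; split; [by move=> [? [? ?]] | by move=> [[? ?] ?]].
Qed.

Lemma prec_size mu lam : prec mu lam -> size lam = (size mu).+1.
Proof. by move=> /prec_precs /mem_precs [_ []]. Qed.

Lemma pths_aux_sound d mu lam a : a \in pths_aux d mu lam ->
  fpath_from_to mu lam a /\ size lam = (size mu + d)%N.
Proof.
elim: d lam a => [|d IH] lam a /=.
- case: eqP => // ->; rewrite inE => /eqP ->; split; last by rewrite addn0.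
  by exists [::].
- move=> /allpairsPdep [nu [a' [nuin a'in ->]]].
  have [[s [-> fp ls]] sz] := IH _ _ a'in.
  have pr : prec nu lam by apply/prec_precs.
  split.
  + exists (rcons s lam); split => //; last by rewrite last_rcons.
    by apply/is_fpath_rcons; rewrite ls.
  + by rewrite (prec_size pr) sz addnS.
Qed.

Lemma pths_aux_complete mu s : is_fpath mu s ->
  (mu :: s) \in pths_aux (size (last mu s) - size mu) mu (last mu s) /\
  (size mu <= size (last mu s))%N.
Proof.
elim/last_ind: s => [|s z IH] /=.
- by rewrite subnn /= eqxx inE.
- rewrite is_fpath_rcons last_rcons => -[fp pr].
  have [IH1 IH2] := IH fp.
  have sz := prec_size pr.
  rewrite sz subSn //; split; last by rewrite ltnW // ltnS.
  apply/allpairsPdep; exists (last mu s), (mu :: s); split => //.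
  exact/prec_precs.
Qed.

Lemma mem_pths mu lam a : (a \in pths mu lam) <-> fpath_from_to mu lam a.
Proof.
split.
- by rewrite /pths; case: ifP => // _ /pths_aux_sound [].
- move=> [s [-> fp ls]]; have := pths_aux_complete fp; rewrite ls => -[h1 h2].
  by rewrite /pths h2.
Qed.

Lemma uniq_pths_aux d mu lam : uniq (pths_aux d mu lam).
Proof.
elim: d lam => [|d IH] lam /=; first by case: ifP.
apply: allpairs_uniq_dep => //; first exact: uniq_precs.
move=> [nu1 a1] [nu2 a2] /allpairsPdep [n1 [b1 [_ b1in e1]]]
  /allpairsPdep [n2 [b2 [_ b2in e2]]] /= e.
move: e1 e2 b1in b2in => [<- <-] [<- <-] b1in b2in.
have ea : a1 = a2 := congr1 fst (rcons_inj e); subst a2.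
have [[s1 [e1 _ l1]] _] := pths_aux_sound b1in.
have [[s2 [e2 _ l2]] _] := pths_aux_sound b2in.
rewrite e1 in e2; case: e2 => e2; subst s2.
by rewrite -l1 -l2.
Qed.

Lemma uniq_pths mu lam : uniq (pths mu lam).
Proof. by rewrite /pths; case: ifP => // _; exact: uniq_pths_aux. Qed.

Section Dimq.
Variables (R : realType) (q : R).

Lemma pw_rcons mu s z : pw q mu (rcons s z) = pw q mu s * edge_w q (last mu s) z.
Proof.
elim: s mu => [|y s IH] mu /=; first by rewrite mulr1 mul1r.
by rewrite IH mulrA.
Qed.

Lemma dimqE mu lam : dimq q mu lam = \sum_(a <- pths mu lam) weight q a.
Proof.
rewrite /dimq.
have -> : [set a | fpath_from_to mu lam a] = [set` pths mu lam].
  apply/seteqP; split => a /= h.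
  - exact/mem_pths.
  - exact/mem_pths.
by rewrite -fsbig_seq // uniq_pths.
Qed.

Lemma dimq_same mu : dimq q mu mu = 1.
Proof. by rewrite dimqE /pths leqnn subnn /= eqxx big_seq1. Qed.

Lemma dimq_small mu lam : (size lam < size mu)%N -> dimq q mu lam = 0.
Proof. by move=> h; rewrite dimqE /pths leqNgt h big_nil. Qed.

Lemma dimq_eqsize mu lam : size lam = size mu -> lam != mu -> dimq q mu lam = 0.
Proof.
by move=> h /negbTE ne; rewrite dimqE /pths h leqnn subnn /= ne big_nil.
Qed.

Lemma dimq_rec mu lam : (size mu < size lam)%N ->
  dimq q mu lam = \sum_(nu <- precs lam) edge_w q nu lam * dimq q mu nu.
Proof.
move=> h; rewrite dimqE /pths (ltnW h).
have -> : (size lam - size mu = (size lam - size mu).-1.+1)%N by rewrite prednK // subn_gt0.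
rewrite /= big_allpairs_dep; apply: eq_big_seq => nu nuin.
have [_ [sz _]] := (mem_precs lam nu).1 nuin.
have hm : (size mu <= size nu)%N by rewrite -ltnS -sz.
rewrite dimqE /pths hm.
have -> : ((size lam - size mu).-1 = size nu - size mu)%N by rewrite sz subSn.
rewrite mulr_sumr; apply: eq_big_seq => a ain.
have [[s [-> _ ls]] _] := pths_aux_sound ain.
by rewrite rcons_cons /= pw_rcons ls mulrC.
Qed.

Lemma weight_ge0 a : 0 < q -> 0 <= weight q a.
Proof.
move=> q0; case: a => [|mu s] /=; first by [].
elim: s mu => [|y s IH] mu /=; first by [].
by rewrite mulr_ge0 // /edge_w exprz_ge0 // ltW.
Qed.

Lemma dimq_ge0 mu lam : 0 < q -> 0 <= dimq q mu lam.
Proof. by move=> q0; rewrite dimqE; apply: sumr_ge0 => a _; exact: weight_ge0. Qed.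

End Dimq.

Lemma sgn_sum_cons a t : sgn_sum (a :: t) = a + sgn_sum t.
Proof. by rewrite /sgn_sum big_cons. Qed.
Lemma sgn_sum_nil : sgn_sum [::] = 0.
Proof. by rewrite /sgn_sum big_nil. Qed.

Fixpoint wsum (l : seq int) : int :=
  match l with [::] => 0 | a :: t => wsum t + sgn_sum t end.
Definition exA (l : seq int) : int := 2 * wsum l + (1 - (size l)%:Z) * sgn_sum l.
Definition Eexp (mu lam : seq int) : int := 2 * (wsum mu + sgn_sum mu - wsum lam).
Definition Eexps (s : nat) mu lam : int :=
  Eexp mu lam + 2 * s%:Z * (sgn_sum mu - sgn_sum (behead lam)).

Lemma last_le_head (b : int) t : signb (b :: t) -> last b t <= b.
Proof.
elim: t b => [|c t IH] b //= /andP [cb st].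
exact: le_trans (IH c st) cb.
Qed.

Section Weights2.
Variables (R : realType) (q : R).

Fixpoint Aw (l : seq int) : R :=
  match l with [::] => 1 | a :: t => edge_w q t (a :: t) * Aw t end.

Fixpoint Gs (s : nat) (l : seq int) : R :=
  match l with
  | a :: t => match t with
              | b :: _ => (a - b)%:~R * q ^+ (2 * s.+1) + Gs s.+1 t
              | [::] => 0 end
  | [::] => 0 end.

Hypothesis q0 : 0 < q.
Hypothesis q1 : q <= 1.

Let qU : q \is a GRing.unit.
Proof. by rewrite unitfE gt_eqF. Qed.

Lemma AwE l : Aw l = q ^ exA l.
Proof.
elim: l => [|a t IH] /=; first by rewrite /exA sgn_sum_nil /= !mulr0 addr0 expr0z.
rewrite IH /edge_w -exprzDr //; congr (q ^ _).
rewrite /exA /= !sgn_sum_cons intS; ring.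
Qed.

Lemma Aw_gt0 l : 0 < Aw l.
Proof. by rewrite AwE exprz_gt0. Qed.

Lemma edge_w_gt0 mu lam : 0 < edge_w q mu lam.
Proof. by rewrite /edge_w exprz_gt0. Qed.

Lemma key_id mu lam : size lam = (size mu).+1 ->
  edge_w q mu lam * Aw mu = Aw lam * q ^ Eexp mu lam.
Proof.
move=> sz; rewrite !AwE /edge_w -!exprzDr //; congr (q ^ _).
rewrite /exA /Eexp sz intS; ring.
Qed.

Lemma behead_precs a t : signb (a :: t) -> t \in precs (a :: t).
Proof.
move=> sl; apply/mem_precs; split => //; split => // i hi.
split => //; have := (signbP _ sl) i; apply; done.
Qed.

Lemma D_ge_A lam : signb lam -> Aw lam <= dimq q [::] lam.
Proof.
elim: lam => [|a t IH] sl; first by rewrite dimq_same.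
rewrite dimq_rec // (bigD1_seq t (behead_precs sl) (uniq_precs _)) /=.
rewrite -[X in X <= _]addr0 lerD //.
- by rewrite ler_wpM2l ?(ltW (edge_w_gt0 _ _)) // IH // (signb_cons sl).
- by apply: sumr_ge0 => nu _; rewrite mulr_ge0 ?(ltW (edge_w_gt0 _ _)) ?dimq_ge0.
Qed.

Lemma geom_irange s a b : b <= a ->
  \sum_(y <- irange b a) q ^ (2 * s.+1%:Z * (y - b)) <= 1 + (a - b)%:~R * q ^+ (2 * s.+1).
Proof.
move=> ba; rewrite /irange big_map.
set n := absz (a - b).
have an : a - b = n%:Z by rewrite /n gez0_abs // subr_ge0.
rewrite an /= big_cons.
rewrite [X in q ^ X](_ : _ = 0); last by ring.
rewrite expr0z lerD //.
rewrite (iotaDl 1 0) big_map (_ : iota 0 n = index_iota 0 n); last by rewrite /index_iota subn0.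
rewrite big_mkord.
apply: (@le_trans _ _ (\sum_(i < n) q ^+ (2 * s.+1))).
- apply: ler_sum => i _.
  rewrite addrC addKr -!PoszM.
  change (q ^+ (2 * s.+1 * (1 + i))%N <= q ^+ (2 * s.+1)).
  by apply: ler_wiXn2l => //; [exact: ltW | rewrite leq_pmulr].
- by rewrite sumr_const card_ord -mulr_natl.
Qed.

Lemma Eexps_cons s y r a b t :
  Eexps s (y :: r) (a :: b :: t) = Eexps s.+1 r (b :: t) + 2 * s.+1%:Z * (y - b).
Proof.
rewrite /Eexps /Eexp /= !sgn_sum_cons intS; ring.
Qed.

Lemma Gs_prod s lam : signb lam -> (0 < size lam)%N ->
  \sum_(mu <- precs0 lam) q ^ Eexps s mu lam <= expR (Gs s lam).
Proof.
elim: lam s => // a [|b t] IH s sl _.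
- rewrite /= big_seq1 (_ : Eexps s [::] [:: a] = 0) ?expr0z ?expR0 //.
  by rewrite /Eexps /Eexp /= !sgn_sum_nil; ring.
- have sbt : signb (b :: t) by exact: signb_cons sl.
  have ba : b <= a by move: sl; rewrite /signb /= => /andP[].
  change (precs0 (a :: b :: t)) with [seq y :: r | y <- irange b a, r <- precs0 (b :: t)].
  rewrite big_allpairs_dep.
  under eq_bigr => y _ do under eq_bigr => r _ do
    rewrite Eexps_cons exprzDr // mulrC.
  under eq_bigr => y _ do rewrite -mulr_sumr.
  rewrite -mulr_suml.
  rewrite (_ : Gs s (a :: b :: t) = (a - b)%:~R * q ^+ (2 * s.+1) + Gs s.+1 (b :: t)) //.
  rewrite expRD.
  apply: ler_pM.
  + by apply: sumr_ge0 => r _; rewrite exprz_ge0 // ltW.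
  + by apply: sumr_ge0 => r _; rewrite exprz_ge0 // ltW.
  + apply: le_trans (geom_irange s ba) _.
    exact: expR_ge1Dx.
  + exact: IH.
Qed.

Lemma Gs_le1 s lam : signb lam ->
  Gs s lam <= (head 0 lam - last 0 lam)%:~R * q ^+ (2 * s.+1).
Proof.
elim: lam s => [|a t1 IH] s sl /=; first by rewrite subrr mul0r.
case: t1 IH sl => [|b t] IH sl /=; first by rewrite subrr mul0r.
have sbt : signb (b :: t) by exact: signb_cons sl.
have ba : b <= a by move: sl; rewrite /signb /= => /andP[].
have := IH s.+1 sbt => /= h.
apply: le_trans (lerD (lexx _) h) _.
have lb := last_le_head sbt.
have -> : a - last b t = (a - b) + (b - last b t) by ring.
rewrite (intrD _ (a - b)) mulrDl; apply: lerD => //.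
rewrite ler_wpM2l //; first by rewrite ler0z subr_ge0.
apply: ler_wiXn2l => //; [exact: ltW | by rewrite leq_mul2l /= ltnW].
Qed.

Lemma Gs_lep p s lam : signb lam -> (0 < p)%N -> (p <= size lam)%N ->
  (forall i, (i.+1 < p)%N -> nth 0 lam i = nth 0 lam i.+1) ->
  Gs s lam <= (head 0 lam - last 0 lam)%:~R * q ^+ (2 * (s + p)).
Proof.
elim: p s lam => // -[|p] IH s lam sl _ hp heq.
- by rewrite addn1; exact: Gs_le1.
- case: lam sl hp heq => [|a [|b t]] sl //= hp heq.
  have sbt : signb (b :: t) by exact: signb_cons sl.
  have ab : a = b by have := heq 0%N isT.
  have := IH s.+1 (b :: t) sbt isT hp (fun i hi => heq i.+1 hi) => /= h.
  by rewrite ab subrr mul0r add0r -addSnnS.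
Qed.

End Weights2.

Section Theta.
Variable theta : nat -> int.

Local Notation x := (lam_th theta).

Lemma size_x n : size (x n) = n.
Proof. by rewrite /lam_th size_rev size_mkseq. Qed.

Lemma nth_x n i : (i < n)%N -> nth 0 (x n) i = theta (n.-1 - i).
Proof.
move=> hi; rewrite /lam_th nth_rev size_mkseq // nth_mkseq; last by lia.
by congr theta; lia.
Qed.

Lemma x_cons n : x n.+1 = theta n :: x n.
Proof. by rewrite /lam_th mkseqS rev_rcons. Qed.

Lemma x0 : x 0 = [::].
Proof. by []. Qed.

Lemma last_mkseq_x N : last [::] (mkseq x N.+1) = x N.
Proof. by rewrite mkseqS last_rcons. Qed.

Hypothesis mono : forall i j, (i <= j)%N -> theta i <= theta j.

Lemma signb_x n : signb (x n).
Proof.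
apply/signbP => i; rewrite size_x => hi.
rewrite !nth_x //; last by lia.
by apply: mono; lia.
Qed.

Lemma x_precs n : x n \in precs (x n.+1).
Proof.
rewrite x_cons; apply: behead_precs; rewrite -x_cons; exact: signb_x.
Qed.

Lemma x_prec n : prec (x n) (x n.+1).
Proof. exact/prec_precs/x_precs. Qed.

Lemma x_inf_path : is_inf_path x.
Proof. by split => // n; exact: x_prec. Qed.

Lemma is_sign_x n : is_sign n (x n).
Proof. by apply/is_signE; rewrite size_x signb_x. Qed.

Lemma fpath_xp N : fpaths_to (x N) (mkseq x N.+1).
Proof.
rewrite /fpaths_to /fpath_from_to /=.
exists (mkseq (fun i => x i.+1) N); split.
- by rewrite /mkseq /= (iotaDl 1 0) -map_comp.
- elim: N => [|N IH] //.
  rewrite mkseqS; apply/is_fpath_rcons; split => //.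
  case: N IH => [|N] IH; first exact: (x_prec 0).
  by rewrite mkseqS last_rcons; exact: (x_prec N.+1).
- case: N => [|N] //; by rewrite mkseqS last_rcons.
Qed.

Variable c : int.
Variable m : nat.
Hypothesis hc : forall i, theta i <= c.
Hypothesis hm : forall i, (m <= i)%N -> theta i = c.

Definition inbox k (lam : seq int) :=
  [/\ size lam = k, signb lam &
      forall i, (i < k)%N -> theta (k.-1 - i) <= nth 0 lam i /\ nth 0 lam i <= c].

Lemma inbox_x n : inbox n (x n).
Proof.
split; [exact: size_x | exact: signb_x | move=> i hi].
by rewrite nth_x.
Qed.

Lemma inbox_precs k lam mu : inbox k.+1 lam -> mu \in precs lam -> inbox k mu.
Proof.
move=> [sl bl hl] /mem_precs [_ [sz hi]].
have smu : size mu = k by move: sz; rewrite sl => -[].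
split => //.
- apply/signbP => i hi'.
  have [h1 _] := hi i (ltnW hi'); have [_ h2] := hi i.+1 hi'.
  exact: le_trans h2 h1.
- move=> i ik; rewrite -smu in ik; have [h1 h2] := hi i ik.
  rewrite smu in ik.
  have [l1 _] := hl i.+1 ik; have [_ u1] := hl i (ltnW ik).
  split; last exact: le_trans h2 u1.
  apply: le_trans h1; move: l1; congr (theta _ <= _); lia.
Qed.

Section Q.
Variables (R : realType) (q : R).
Hypothesis q0 : 0 < q.
Hypothesis q1 : q < 1.

Let B := c - theta 0.

Lemma B_ge0 : 0 <= B.
Proof. by rewrite subr_ge0. Qed.

Lemma Gs_box k lam : inbox k lam -> (0 < k)%N ->
  Gs q 0 lam <= B%:~R * q ^+ (k - m).
Proof.
move=> [sl bl hl] k0.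
set p := maxn 1 (k - m).
have p0 : (0 < p)%N by rewrite leq_max.
have pk : (p <= size lam)%N by rewrite sl geq_max k0 leq_subr.
have heq : forall i, (i.+1 < p)%N -> nth 0 lam i = nth 0 lam i.+1.
  move=> i hi.
  have hi' : (i.+1 < k - m)%N by move: hi; rewrite /p; lia.
  have [l1 u1] := hl i ltac:(lia); have [l2 u2] := hl i.+1 ltac:(lia).
  rewrite hm in l1; last by lia.
  rewrite hm in l2; last by lia.
  have e1 : nth 0 lam i = c by apply/eqP; rewrite eq_le u1 l1.
  have e2 : nth 0 lam i.+1 = c by apply/eqP; rewrite eq_le u2 l2.
  by rewrite e1 e2.
apply: le_trans (Gs_lep q0 (ltW q1) 0 bl p0 pk heq) _.
rewrite add0n.
have hd : head 0 lam - last 0 lam <= B.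
  rewrite /B lerB //.
  + by rewrite -nth0; have [_ h] := hl 0%N k0.
  + rewrite -nth_last sl; have [h _] := hl k.-1 ltac:(lia).
    by move: h; rewrite subnn.
have hd0 : 0 <= head 0 lam - last 0 lam.
  case: lam sl bl {hl heq pk hd} => [|a t] // _ bl /=; rewrite subr_ge0.
  exact: last_le_head.
apply: ler_pM => //.
- by rewrite ler0z.
- by rewrite exprn_ge0 // ltW.
- by rewrite ler_int.
- apply: ler_wiXn2l; [exact: ltW | exact: ltW | rewrite /p; lia].
Qed.

Definition Sk k := \sum_(j < k) q ^+ (j.+1 - m).

Lemma D_le k lam : inbox k lam -> dimq q [::] lam <= Aw q lam * expR (B%:~R * Sk k).
Proof.
elim: k lam => [|k IH] lam hb.
- have [sl _ _] := hb; case: lam sl hb => // _ _.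
  by rewrite dimq_same /Sk big_ord0 mulr0 expR0 mulr1.
- have [sl bl _] := hb.
  rewrite dimq_rec; last by rewrite sl.
  apply: (@le_trans _ _ (\sum_(nu <- precs lam) Aw q lam * q ^ Eexp nu lam * expR (B%:~R * Sk k))).
  + rewrite big_seq_cond [X in _ <= X]big_seq_cond; apply: ler_sum => nu /andP [nin _].
    have [_ [sz _]] := (mem_precs lam nu).1 nin.
    rewrite -key_id //.
    rewrite -mulrA ler_wpM2l ?(ltW (edge_w_gt0 _ _ _)) //.
    exact: IH (inbox_precs hb nin).
  + rewrite -mulr_suml -mulr_sumr -mulrA ler_wpM2l ?(ltW (Aw_gt0 _ _)) //.
    rewrite /Sk big_ord_recr /= mulrDr expRD mulrC ler_wpM2l ?expR_ge0 //.
    apply: (@le_trans _ _ (expR (Gs q 0 lam))); last first.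
      by rewrite ler_expR; apply: Gs_box => //.
    rewrite /precs bl.
    have -> : \sum_(nu <- precs0 lam) q ^ Eexp nu lam =
              \sum_(nu <- precs0 lam) q ^ Eexps 0 nu lam.
      by apply: eq_bigr => nu _; rewrite /Eexps mulr0 mul0r addr0.
    apply: Gs_prod => //; [exact: ltW | by rewrite sl].
Qed.


Lemma Sk_le k : Sk k <= (1 - q)^-1 / q ^+ m.
Proof.
have qm0 : 0 < q ^+ m by rewrite exprn_gt0.
have q10 : 0 < 1 - q by rewrite subr_gt0.
apply: (@le_trans _ _ (\sum_(j < k) q ^+ j / q ^+ m)).
- apply: ler_sum => j _; rewrite ler_pdivlMr // -exprD.
  apply: ler_wiXn2l; [exact: ltW | exact: ltW | lia].
- rewrite -mulr_suml ler_pM2r ?invr_gt0 //.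
  rewrite -[X in _ <= X]div1r ler_pdivlMr //.
  have := subrX1 q k; rewrite mulrC => h.
  have -> : (\sum_(i < k) q ^+ i) * (1 - q) = 1 - q ^+ k.
    by rewrite -opprB mulrN -h opprB.
  by rewrite lerBlDr lerDl exprn_ge0 // ltW.
Qed.

Lemma D_bound n : dimq q [::] (x n) <= Aw q (x n) * expR (B%:~R * ((1 - q)^-1 / q ^+ m)).
Proof.
apply: le_trans (D_le (inbox_x n)) _.
rewrite ler_wpM2l ?(ltW (Aw_gt0 _ _)) // ler_expR ler_wpM2l ?ler0z ?B_ge0 //.
exact: Sk_le.
Qed.

Lemma reach mu nu : dimq q mu nu != 0 ->
  [/\ (size mu <= size nu)%N,
      forall i, (i < size mu)%N -> nth 0 mu i <= nth 0 nu i &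
      forall i, (size nu - size mu <= i < size nu)%N ->
        nth 0 nu i <= nth 0 mu (i - (size nu - size mu))].
Proof.
move=> hnz.
have hle : (size mu <= size nu)%N.
  by rewrite leqNgt; apply: contra hnz => h; rewrite dimq_small.
move: {2}(size nu - size mu)%N (erefl (size nu - size mu)%N) => k.
elim: k nu hnz hle => [|k IH] nu hnz hle hk.
- have sz : size nu = size mu by lia.
  have enu : nu = mu.
    by apply/eqP; apply: contraNT hnz => ne; rewrite dimq_eqsize.
  subst nu; split => // i hi; rewrite hk subn0 //.
- have lt : (size mu < size nu)%N by lia.
  have : ~~ all (fun nu' => dimq q mu nu' == 0) (precs nu).
    apply: contra hnz => /allP h; rewrite dimq_rec // big1_seq //.
    by move=> nu' /andP [_ /h /eqP ->]; rewrite mulr0.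
  case/allPn => nu0 nin nz; set nu' : seq int := nu0 in nin nz.
  have [_ [sz hint]] := (mem_precs nu nu').1 nin.
  have hle' : (size mu <= size nu')%N by lia.
  have [_ h1 h2] := IH nu' nz hle' ltac:(lia).
  split => //.
  + move=> i hi; have [_ u] := hint i ltac:(lia).
    exact: le_trans (h1 i hi) u.
  + move=> i /andP [hi1 hi2].
    have [l _] := hint i.-1 ltac:(lia).
    have e : i.-1.+1 = i by lia.
    rewrite e in l; apply: le_trans l _.
    have := h2 i.-1 ltac:(lia).
    by have -> : (i.-1 - (size nu' - size mu) = i - (size nu - size mu))%N by lia.
Qed.

Lemma x_forced N n (nu : seq int) : (m <= N)%N -> (N <= n)%N ->
  nu \in precs (x n.+1) -> dimq q (x N) nu != 0 -> nu = x n.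
Proof.
move=> mN Nn nin nz.
have [_ [sz hint]] := (mem_precs _ nu).1 nin.
have szn : size nu = n by move: sz; rewrite size_x => -[].
have [_ _ h2] := reach nz.
rewrite size_x szn in h2.
apply: (@eq_from_nth _ 0); first by rewrite szn size_x.
move=> i; rewrite szn => hi.
rewrite nth_x //; apply/eqP; rewrite eq_le; apply/andP; split.
- have [iN | iN] := leqP (n - N) i.
  + apply: le_trans (h2 i ltac:(lia)) _.
    rewrite nth_x; last by lia.
    by apply: mono; lia.
  + have [_ u] := hint i ltac:(lia).
    apply: le_trans u _; rewrite nth_x; last by lia.
    by rewrite (@hm (n.-1 - i)%N); [exact: hc | lia].
- have [l _] := hint i ltac:(lia).
  apply: le_trans l; rewrite nth_x; last by lia.
  by apply: mono; lia.
Qed.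

Lemma dimq_xx N k : (m <= N)%N ->
  dimq q (x N) (x (N + k)) = Aw q (x (N + k)) / Aw q (x N).
Proof.
move=> mN; elim: k => [|k IH].
- by rewrite addn0 dimq_same divff // gt_eqF // Aw_gt0.
- rewrite addnS dimq_rec; last by rewrite !size_x; lia.
  rewrite (bigD1_seq _ (x_precs _) (uniq_precs _)) /=.
  rewrite big1_seq ?addr0; last first.
    move=> nu /andP [ne nin]; apply/eqP; rewrite mulf_eq0; apply/orP; right.
    apply: contraNT ne => nz; apply/eqP.
    exact: (x_forced mN (leq_addr k N) nin nz).
  rewrite IH x_cons /= mulrA.
  by rewrite -x_cons.
Qed.

Lemma weight_xp N : weight q (mkseq x N.+1) = Aw q (x N).
Proof.
elim: N => [|N IH]; first by [].
rewrite mkseqS.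
have -> : mkseq x N.+1 = [::] :: mkseq (fun i => x i.+1) N.
  by rewrite /mkseq /= (iotaDl 1 0) -map_comp.
rewrite rcons_cons /= pw_rcons.
have <- : weight q ([::] :: mkseq (fun i => x i.+1) N) = pw q [::] (mkseq (fun i => x i.+1) N) by [].
have -> : [::] :: mkseq (fun i => x i.+1) N = mkseq x N.+1.
  by rewrite /mkseq /= (iotaDl 1 0) -map_comp.
rewrite IH x_cons /= mulrC; congr (_ * _).
have -> : last [::] (mkseq (fun i => x i.+1) N) = x N.
  by case: N {IH} => // N; rewrite mkseqS last_rcons.
by rewrite -x_cons.
Qed.

End Q.
End Theta.

Lemma is_fpath_cat mu s1 s2 :
  is_fpath mu (s1 ++ s2) <-> is_fpath mu s1 /\ is_fpath (last mu s1) s2.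
Proof.
elim: s1 mu => [|y s IH] mu /=; first by split => // -[].
rewrite IH; split; [by move=> [? [? ?]] | by move=> [[? ?] ?]].
Qed.

Lemma fpath_size mu s : is_fpath mu s -> size (last mu s) = (size mu + size s)%N.
Proof.
elim: s mu => [|y s IH] mu /=; first by rewrite addn0.
by move=> [/prec_size h /IH ->]; rewrite h addSnnS.
Qed.

Lemma fpath_mkseq (w : nat -> seq int) N : is_inf_path w ->
  fpaths_to (w N) (mkseq w N.+1).
Proof.
move=> [w0 hw]; rewrite /fpaths_to /fpath_from_to /=.
exists (mkseq (fun i => w i.+1) N); split.
- by rewrite /mkseq /= (iotaDl 1 0) -map_comp w0.
- elim: N => [|N IH] //.
  rewrite mkseqS; apply/is_fpath_rcons; split => //.
  case: N IH => [|N] IH; first by rewrite /= -w0; exact: hw.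
  by rewrite mkseqS last_rcons; exact: hw.
- case: N => [|N] //; by rewrite mkseqS last_rcons.
Qed.

Lemma fpaths_size lam a : fpaths_to lam a -> size a = (size lam).+1.
Proof. by move=> [s [-> fp <-]]; rewrite fpath_size. Qed.

Lemma fpaths_nth lam a : fpaths_to lam a -> nth [::] a (size lam) = lam.
Proof.
move=> h; have := fpaths_size h; move: h => [s [-> fp ls]] sz.
by rewrite -[size lam]/((size lam).+1.-1) -sz nth_last.
Qed.

Lemma cyl_meas a lam : fpaths_to lam a -> measurable (cyl a : set OmegaM).
Proof. by move=> h; apply: sub_sigma_algebra; exists lam, a. Qed.

Lemma bigcup_pickle (I : countType) (T : Type) (S : set I) (F : I -> set T) :
  \bigcup_(i in S) F i =
  \bigcup_n (if unpickle n is Some i then (if `[< S i >] then F i else set0) else set0).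
Proof.
apply/seteqP; split => w.
- move=> [i Si Fi]; exists (pickle i) => //; rewrite pickleK.
  by rewrite (asboolT Si).
- move=> [n _]; case: (unpickle n) => // i.
  by case: asboolP => // Si Fi; exists i.
Qed.

Lemma bigcupC_meas (I : countType) (S : set I) (F : I -> set OmegaM) :
  (forall i, S i -> measurable (F i)) -> measurable (\bigcup_(i in S) F i).
Proof.
move=> h; rewrite bigcup_pickle; apply: bigcupT_measurable => n.
case: (unpickle n) => // i; case: asboolP => // Si; exact: h.
Qed.

Lemma level_setE lam : level_set (size lam) lam = \bigcup_(b in fpaths_to lam) cyl b.
Proof.
apply/seteqP; split => w.
- move=> hw; exists (mkseq (sval w) (size lam).+1).
  + have := fpath_mkseq (size lam) (svalP w).
    by rewrite [X in fpaths_to X]hw.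
  + by move=> i; rewrite size_mkseq => hi; rewrite nth_mkseq.
- move=> [b hb cw]; rewrite /level_set /=.
  rewrite cw; first exact: fpaths_nth.
  by rewrite (fpaths_size hb).
Qed.

Lemma level_set_meas lam : measurable (level_set (size lam) lam).
Proof. by rewrite level_setE; apply: bigcupC_meas => b hb; exact: cyl_meas hb. Qed.

Lemma weight_gt0 (R : realType) (q : R) a : 0 < q -> 0 < weight q a.
Proof.
move=> q0; case: a => [|mu s] /=; first exact: ltr01.
elim: s mu => [|y s IH] mu /=; first exact: ltr01.
by rewrite mulr_gt0 // /edge_w exprz_gt0.
Qed.

Lemma mono_all (theta : nat -> int) : (forall i, theta i <= theta i.+1) ->
  forall i j, (i <= j)%N -> theta i <= theta j.
Proof.
move=> h i j /subnK <-; elim: (j - i)%N => [|k IH]; first by rewrite add0n.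
by rewrite addSn; exact: le_trans IH (h _).
Qed.

Lemma ev_const (theta : nat -> int) (M : int) : (forall i, theta i <= theta i.+1) ->
  (forall i, `|theta i| <= M) ->
  exists m c, (forall i, theta i <= c) /\ (forall i, (m <= i)%N -> theta i = c).
Proof.
move=> h hM; have mono := mono_all h.
have tM : forall i, theta i <= M by move=> i; exact: le_trans (ler_norm _) (hM i).
have exP : exists n, (fun n => `[< exists i, absz (M - theta i) = n >]) n.
  by exists (absz (M - theta 0%N)); apply/asboolP; exists 0%N.
case: (ex_minnP exP) => n /asboolP [i0 hi0] hmin.
have hc : forall j, theta j <= theta i0.
  move=> j; rewrite leNgt; apply/negP => hj.
  set k := maxn i0 j.
  have hk : theta j <= theta k by apply: mono; rewrite leq_maxr.
  have := hmin (absz (M - theta k)); rewrite -/(is_true _).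
  have -> : `[< exists i, absz (M - theta i) = absz (M - theta k) >] by apply/asboolP; exists k.
  move=> /(_ isT); have := tM k; have := tM i0; lia.
exists i0, (theta i0); split => // i hi; apply/eqP; rewrite eq_le hc mono //.
Qed.

Definition sw (a b z : seq (seq int)) := if z == a then b else if z == b then a else z.

Lemma swK a b : involutive (sw a b).
Proof.
move=> z; rewrite /sw; case: (eqVneq z a) => [->|za].
- by rewrite eqxx; case: (eqVneq b a) => [->|] //; rewrite eqxx.
- case: (eqVneq z b) => [->|zb]; first by rewrite eqxx.
  by rewrite (negbTE za) (negbTE zb).
Qed.

Lemma sw_bij (A : set (seq (seq int))) a b : A a -> A b -> set_bij A A (sw a b).
Proof.
move=> Aa Ab.
have hf : set_fun A A (sw a b).
  by move=> z Az; rewrite /sw; case: ifP => // _; case: ifP.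
split => //.
- by move=> z1 z2 _ _ e; rewrite -(swK a b z1) e swK.
- by move=> z Az; exists (sw a b z); [exact: hf | rewrite swK].
Qed.

Lemma pw_cat mu s1 s2 (R : realType) (q : R) :
  pw q mu (s1 ++ s2) = pw q mu s1 * pw q (last mu s1) s2.
Proof.
elim: s1 mu => [|y s IH] mu /=; first by rewrite mul1r.
by rewrite IH mulrA.
Qed.

Lemma bigcupC_negl (R : realType) (P : probability OmegaM R) (I : countType)
  (S : set I) (F : I -> set OmegaM) :
  (forall i, S i -> P.-negligible (F i)) -> P.-negligible (\bigcup_(i in S) F i).
Proof.
move=> h; rewrite bigcup_pickle.
apply: (@negligible_bigcup _ _ _ P) => n.
case: (unpickle n) => [i|]; last exact: negligible_set0.
case: asboolP => Si; last exact: negligible_set0.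
exact: h.
Qed.

Section Main.
Variables (R : realType) (q : R) (theta : nat -> int) (P : probability OmegaM R).
Variables (m : nat) (c : int).
Hypothesis q0 : 0 < q.
Hypothesis q1 : q < 1.
Hypothesis mono : forall i j, (i <= j)%N -> theta i <= theta j.
Hypothesis hc : forall i, theta i <= c.
Hypothesis hm : forall i, (m <= i)%N -> theta i = c.
Hypothesis hPt : is_P_theta q theta P.

Local Notation x := (lam_th theta).
Let A n := Aw q (x n).
Let D n := dimq q [::] (x n).
Let r n := A n / D n.
Let C := expR ((c - theta 0%N)%:~R * ((1 - q)^-1 / q ^+ m)).
Let xp N := mkseq x N.+1.

Let A_gt0 n : 0 < A n. Proof. exact: Aw_gt0. Qed.
Let D_gt0 n : 0 < D n.
Proof. exact: lt_le_trans (A_gt0 n) (D_ge_A q0 (signb_x mono n)). Qed.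

Let r_ge n : C^-1 <= r n.
Proof.
rewrite /r ler_pdivlMr ?D_gt0 // ler_pdivrMl ?expR_gt0 // mulrC.
exact: (D_bound mono hc hm q0 q1 n).
Qed.

Let fin (S : set OmegaM) : measurable S -> P S = (fine (P S))%:E.
Proof. by move=> mS; rewrite fineK // fin_num_measure. Qed.

Let cvg_r N : (m <= N)%N -> r n @[n --> \oo] --> fine (P (cyl (xp N))).
Proof.
move=> mN.
have h := hPt.2 N (x N) (xp N) (is_sign_x mono N) (fpath_xp mono N).
rewrite weight_xp in h.
have h2 : (fun n => dimq q (x N) (x n) / D n * A N) @ \oo -->
    fine (P (cyl (xp N))) / A N * A N.
  by apply: cvgM => //; exact: cvg_cst.
rewrite divfK ?gt_eqF ?A_gt0 // in h2.
apply: (cvg_trans _ h2); apply: near_eq_cvg; near=> n.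
have hn : (N <= n)%N by near: n; exists N.
rewrite /r -(subnKC hn) (dimq_xx mono hc hm q0 q1 _ mN) /= -/(A _) -/(D _) -/(A N).
by rewrite mulrAC divfK // gt_eqF // A_gt0.
Unshelve. all: end_near.
Qed.

Let L := fine (P (cyl (xp m))).

Let LN N : (m <= N)%N -> fine (P (cyl (xp N))) = L.
Proof.
move=> mN; rewrite -(cvg_lim _ (cvg_r mN)) //.
by rewrite (cvg_lim _ (cvg_r (leqnn m))).
Qed.

Let L_ge : C^-1 <= L.
Proof.
have hr := cvg_r (leqnn m); rewrite -/L in hr.
rewrite -(cvg_lim _ hr) //; apply: limr_ge; first exact: cvgP hr.
by near=> n; exact: r_ge.
Unshelve. all: end_near.
Qed.

Let L_gt0 : 0 < L.
Proof. by apply: lt_le_trans L_ge; rewrite invr_gt0 expR_gt0. Qed.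

Let p_val N : (m <= N)%N -> fine (P (level_set N (x N))) = L / r N.
Proof.
move=> mN.
have := hPt.1 N (x N) (xp N) (is_sign_x mono N) (fpath_xp mono N).
rewrite weight_xp LN // -/(A N) -/(D N) => h.
have -> : fine (P (level_set N (x N))) = L / A N * D N.
  by rewrite h divfK // gt_eqF // D_gt0.
by rewrite /r invf_div mulrA mulrAC.
Qed.

Let p_cvg : (fun N => fine (P (level_set N (x N)))) @ \oo --> (1 : R).
Proof.
have hr := cvg_r (leqnn m); rewrite -/L in hr.
have h : (fun N => L * (r N)^-1) @ \oo --> L * L^-1.
  apply: cvgM; first exact: cvg_cst.
  by apply: cvgV => //; exact: lt0r_neq0.
rewrite divff ?gt_eqF ?L_gt0 // in h.
apply: (cvg_trans _ h); apply: near_eq_cvg; near=> N.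
have hn : (m <= N)%N by near: N; exists m.
by rewrite /= p_val.
Unshelve. all: end_near.
Qed.

Let cyl_val N a : (m <= N)%N -> fpaths_to (x N) a ->
  fine (P (cyl a)) = weight q a * (L / A N).
Proof.
move=> mN ha.
have := hPt.1 N (x N) a (is_sign_x mono N) ha.
rewrite p_val // => h.
have e : L / r N / D N = L / A N.
  by rewrite /r; field; rewrite !gt_eqF ?A_gt0 ?D_gt0.
rewrite e in h.
by rewrite -h mulrC divfK // gt_eqF // weight_gt0.
Qed.

Let mcyl N : measurable (cyl (xp N) : set OmegaM).
Proof. exact: cyl_meas (fpath_xp mono N). Qed.

Let cyl_sub N M : (N <= M)%N -> (cyl (xp M) : set OmegaM) `<=` cyl (xp N).
Proof.
move=> NM w hw i; rewrite size_mkseq => hi.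
rewrite nth_mkseq // (hw i); last by rewrite size_mkseq; lia.
by rewrite nth_mkseq //; lia.
Qed.

Lemma part1 : (0 < P [set w : OmegaM | sval w = x])%E.
Proof.
set X := [set w : OmegaM | sval w = x].
have Xe : X = \bigcap_N cyl (xp N).
  apply/seteqP; split => w.
  - by move=> /= hw N _ i; rewrite size_mkseq => hi; rewrite nth_mkseq // hw.
  - move=> hw; rewrite /X /=; apply: funext => i.
    have := hw i I i; rewrite size_mkseq nth_mkseq //; apply; done.
have mX : measurable X by rewrite Xe; apply: bigcapT_measurable => N; exact: mcyl.
set Z := \bigcup_M ((cyl (xp m) : set OmegaM) `\` cyl (xp (m + M))).
have mZ : measurable Z.
  by apply: bigcupT_measurable => M; apply: measurableD; exact: mcyl.
have PZ : P Z = 0%E.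
  apply/negligibleP => //; apply: negligible_bigcup => M.
  apply/negligibleP; first by apply: measurableD; exact: mcyl.
  rewrite measureD //; last first.
    by apply: (le_lt_trans (probability_le1 P (mcyl m))); exact: ltry.
  rewrite setIidr; last exact: cyl_sub (leq_addr _ _).
  rewrite [X in (X - _)%E](fin (mcyl m)) [X in (_ - X)%E](fin (mcyl (m + M))).
  rewrite !LN ?leq_addr //.
  by rewrite -EFinB subrr.
have sXZ : (cyl (xp m) : set OmegaM) `<=` X `|` Z.
  move=> w hw; case: (pselect (sval w = x)) => [h|h]; [by left|right].
  have /existsNP [i hi] : ~ (forall i, sval w i = x i).
    by move=> hh; apply: h; apply: funext.
  exists i => //; split => //.
  move=> hc'; apply: hi; have := hc' i; rewrite size_mkseq nth_mkseq; last by lia.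
  by apply; lia.
have : (L%:E <= P X)%E.
  rewrite /L -fin; last exact: mcyl.
  apply: (@le_trans _ _ (P (X `|` Z))).
    by apply: le_measure => //; rewrite inE; [exact: mcyl | exact: measurableU].
  apply: le_trans (measureU2 _ _ _) _ => //.
  by rewrite [X in (_ + X)%E]PZ adde0.
by apply: lt_le_trans; rewrite lte_fin L_gt0.
Qed.

Let T' : set OmegaM := \bigcup_N \bigcap_i (level_set (N + i)%N (x (N + i)%N) : set OmegaM).

Lemma orbitE : S_orbit x = T'.
Proof.
apply/seteqP; split => w.
- move=> [N [s [hs ew]]]; exists N.+1 => // i _; rewrite /level_set /= ew.
  suff : forall j, (N < j)%N -> foldr gact x s j = x j by apply; lia.
  elim: s hs {ew} => [|g s IH] //= [hsg hs'] j hj.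
  have sg : size (g_lam g) = N by have [/is_signE []] := hsg.
  rewrite /gact sg; case: ifP => _; last exact: IH.
  by rewrite leqNgt hj /=; exact: IH.
- move=> [N _ hw].
  have hwN : forall i, (N <= i)%N -> sval w i = x i.
    by move=> i hi; have := hw (i - N)%N I; rewrite /level_set /= subnKC.
  set b := mkseq (sval w) N.+1.
  have hb : fpaths_to (x N) b.
    by have := fpath_mkseq N (svalP w); rewrite (hwN N (leqnn N)).
  exists N, [:: Gen (x N) (sw (xp N) b)]; split.
  + split => //; split; first exact: is_sign_x mono N.
    exact: sw_bij (fpath_xp mono N) hb.
  + rewrite /= /gact /= size_x eqxx; apply: funext => i.
    case: leqP => hi.
    * by rewrite /sw eqxx /b nth_mkseq.
    * by rewrite hwN // ltnW.
Qed.

Let mE k : measurable (level_set k (x k) : set OmegaM).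
Proof. by have := level_set_meas (x k); rewrite size_x. Qed.

Let mT : measurable T'.
Proof.
by apply: bigcupT_measurable => N; apply: bigcapT_measurable => i; exact: mE.
Qed.

Let key N : (m <= N)%N -> fine (P (level_set N (x N))) <= fine (P T').
Proof.
move=> mN.
pose seg M := mkseq (fun i => x (N + i.+1)) M.
have seg_ok M : is_fpath (x N) (seg M) /\ last (x N) (seg M) = x (N + M).
  elim: M => [|M [IH1 IH2]]; first by rewrite addn0.
  rewrite /seg mkseqS -/(seg M) last_rcons addnS; split => //.
  by apply/is_fpath_rcons; split => //; rewrite IH2; exact: x_prec.
have pw_seg M : pw q (x N) (seg M) = A (N + M) / A N.
  elim: M => [|M IH]; first by rewrite addn0 divff // gt_eqF.
  rewrite /seg mkseqS -/(seg M) pw_rcons IH (seg_ok M).2 addnS.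
  rewrite /A x_cons /= -x_cons.
  by rewrite mulrAC; congr (_ / _); exact: mulrC.
have bseg b M : fpaths_to (x N) b ->
    [/\ fpaths_to (x (N + M)) (b ++ seg M),
        weight q (b ++ seg M) = weight q b * (A (N + M) / A N) &
        (cyl (b ++ seg M) : set OmegaM) `<=` cyl b].
  move=> [s [-> fp ls]]; split.
  - exists (s ++ seg M); split => //.
    + by apply/is_fpath_cat; rewrite ls; split => //; exact: (seg_ok M).1.
    + by rewrite last_cat ls (seg_ok M).2.
  - by rewrite /= pw_cat ls pw_seg.
  - move=> w hw i hi; rewrite hw; last by rewrite size_cat ltn_addr.
    by rewrite nth_cat hi.
have null b M : fpaths_to (x N) b -> P (cyl b `\` cyl (b ++ seg M)) = 0%E.
  move=> hb; have [hb' hw hs] := bseg b M hb.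
  have mb := cyl_meas hb; have mb' := cyl_meas hb'.
  rewrite measureD //; last first.
    by apply: (le_lt_trans (probability_le1 P mb)); exact: ltry.
  rewrite setIidr //.
  rewrite [X in (X - _)%E](fin mb) [X in (_ - X)%E](fin mb').
  rewrite (cyl_val mN hb) (cyl_val (leq_trans mN (leq_addr M N)) hb') hw.
  rewrite -EFinB; congr (_%:E).
  by field; rewrite !gt_eqF ?A_gt0.
pose ZN := \bigcup_M \bigcup_(b in fpaths_to (x N))
                ((cyl b : set OmegaM) `\` cyl (b ++ seg M)).
have nZ : P.-negligible ZN.
  rewrite /ZN; apply: (@negligible_bigcup _ _ _ P) => M.
  apply: bigcupC_negl => b hb.
  apply/negligibleP; last exact: null.
  have [hb' _ _] := bseg b M hb.
  by apply: measurableD; [exact: cyl_meas hb | exact: cyl_meas hb'].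
have [Zm [mZm PZm sZ]] := nZ.
have sub : level_set N (x N) `<=` T' `|` Zm.
  move=> w hw; case: (pselect (forall i, sval w (N + i)%N = x (N + i)%N)) => h.
  - by left; exists N => // i _; exact: h i.
  - right; apply: sZ; have /existsNP [i hi] := h.
    case: i hi => [|i] hi; first by exfalso; apply: hi; rewrite addn0.
    exists i.+1 => //; exists (mkseq (sval w) N.+1).
    + by have := fpath_mkseq N (svalP w); rewrite hw.
    + split.
      * by move=> j; rewrite size_mkseq => hj; rewrite nth_mkseq.
      * move=> hc'; apply: hi.
        have h1 : (N + i.+1 < size (mkseq (sval w) N.+1 ++ seg i.+1))%N.
          by rewrite size_cat !size_mkseq; lia.
        rewrite (hc' _ h1) nth_cat size_mkseq ltnNge (_ : (N.+1 <= N + i.+1)%N) /=;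
          last by lia.
        rewrite (_ : (N + i.+1 - N.+1 = i)%N); last by lia.
        by rewrite nth_mkseq.
have : ((fine (P (level_set N (x N))))%:E <= (fine (P T'))%:E)%E.
  rewrite -!fin //.
  apply: (@le_trans _ _ (P (T' `|` Zm))).
    by apply: le_measure => //; rewrite inE //; exact: measurableU.
  apply: le_trans (measureU2 _ _ _) _ => //.
  by rewrite [X in (_ + X)%E]PZm adde0.
by rewrite lee_fin.
Qed.

Lemma part2 : P (S_orbit x) = 1%E.
Proof.
rewrite orbitE.
have hle : 1 <= fine (P T').
  rewrite -(cvg_lim _ p_cvg) //; apply: limr_le; first exact: cvgP p_cvg.
  near=> N; apply: key; near: N; exists m => //.
apply/eqP; rewrite eq_le probability_le1 //=.
by rewrite (fin mT) lee_fin.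
Unshelve. all: end_near.
Qed.

End Main.

Unset Implicit Arguments.

Theorem lemma4p2 (R : realType) (q : R) (theta : nat -> int)
  (P : probability OmegaM R) :
  0 < q < 1 ->
  (forall i, theta i <= theta i.+1) ->
  (exists M : int, forall i, `|theta i| <= M) ->
  is_P_theta q theta P ->
  (0 < P [set w : OmegaM | sval w = lam_th theta])%E /\
  P (S_orbit (lam_th theta)) = 1%E.
Proof.
move=> /andP [q0 q1] hstep [M hM] hPt.
have mono := mono_all hstep.
have [m [c [hc hm]]] := ev_const hstep hM.
split.
- exact: (part1 q0 q1 mono hc hm hPt).
- exact: (part2 q0 q1 mono hc hm hPt).
Qed.
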